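(* Let $X,Y$ be Banach spaces, let $F:X\rightrightarrows Y$ be a closed convex set-valued mapping, let $A\subset X$ be a closed convex set, let $\bar y\in Y$, put $S:=F^{-1}(\bar y)\cap A$, and let $\bar x\in S$. Let $\eta\in(0,+\infty)$ be such that $$DF^{-1}(\bar y,\bar x)(\eta_1B_Y)\cap(T(A,\bar x)+\eta_2B_X)\subset B_X\quad\text{for all }\eta_1,\eta_2\ge0\text{ with }\eta_1+\eta_2<\eta.$$ Then $S=\{\bar x\}$.
   Context: $B_X,B_Y$ are the closed unit balls. $F$ closed convex means ${\rm gph}(F)=\{(x,y):y\in F(x)\}$ is closed and convex in $X\times Y$. For a closed convex set $C$ and $a\in C$, the contingent cone $T(C,a)$ is the set of $v$ for which there exist $v_n\to v$, $t_n\to0^+$ with $a+t_nv_n\in C$ for all $n$. For $(x,y)\in{\rm gph}(F)$, $DF^{-1}(y,x)(v):=\{u\in X:(u,v)\in T({\rm gph}(F),(x,y))\}$ and $DF^{-1}(y,x)(W)=\bigcup_{v\in W}DF^{-1}(y,x)(v)$ for $W\subset Y$. *)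

(* Defs.v *)
From HB Require Import structures.
From mathcomp Require Import all_boot all_order all_algebra.
From mathcomp Require Import all_classical all_reals all_analysis.
Set Implicit Arguments. Unset Strict Implicit. Unset Printing Implicit Defensive.
Import Order.TTheory GRing.Theory Num.Theory.
Import numFieldNormedType.Exports.
Local Open Scope classical_set_scope.
Local Open Scope ring_scope.

Definition unit_ball {R : realType} (V : normedModType R) : set V :=
  [set x | `|x| <= 1].
Arguments unit_ball {R} V.

Definition scale_set {R : realType} (V : normedModType R) (r : R) (C : set V) : set V :=
  [set r *: c | c in C].

Definition mink_sum {R : realType} (V : normedModType R) (C D : set V) : set V :=
  [set c + d | c in C & d in D].

Definition convex_set' {R : realType} (V : normedModType R) (C : set V) : Prop :=
  forall a b t, C a -> C b -> 0 <= t <= 1 -> C (t *: a + (1 - t) *: b).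

Definition gph {X Y : Type} (F : X -> set Y) : set (X * Y) :=
  [set p | F p.1 p.2].

Definition closed_convex_map {R : realType} (X Y : normedModType R)
    (F : X -> set Y) : Prop :=
  closed (gph F) /\
  (forall x1 y1 x2 y2 t, F x1 y1 -> F x2 y2 -> 0 <= t <= 1 ->
     F (t *: x1 + (1 - t) *: x2) (t *: y1 + (1 - t) *: y2)).

Definition contingent_cone {R : realType} (V : normedModType R) (C : set V) (a : V)
    : set V :=
  [set v | exists (vn : nat -> V) (tn : nat -> R),
     vn @ \oo --> v /\ tn @ \oo --> 0 /\ (forall n, 0 < tn n) /\
     (forall n, C (a + tn n *: vn n))].

(* contingent cone of gph F at (x, y), with convergence in X x Y written
   componentwise *)
Definition gph_contingent {R : realType} (X Y : normedModType R)
    (F : X -> set Y) (x : X) (y : Y) : set (X * Y) :=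
  [set w | exists (un : nat -> X) (vn : nat -> Y) (tn : nat -> R),
     un @ \oo --> w.1 /\ vn @ \oo --> w.2 /\ tn @ \oo --> 0 /\
     (forall n, 0 < tn n) /\
     (forall n, F (x + tn n *: un n) (y + tn n *: vn n))].

Definition DFinv {R : realType} (X Y : normedModType R)
    (F : X -> set Y) (y : Y) (x : X) (v : Y) : set X :=
  [set u | gph_contingent F x y (u, v)].

Definition DFinv_set {R : realType} (X Y : normedModType R)
    (F : X -> set Y) (y : Y) (x : X) (W : set Y) : set X :=
  [set u | exists2 v, W v & DFinv F y x v u].

(* Main.v *)
Require Import Defs.
From HB Require Import structures.
From mathcomp Require Import all_boot all_order all_algebra.
From mathcomp Require Import all_classical all_reals all_analysis.
From mathcomp Require Import lra.
Import Order.TTheory GRing.Theory Num.Theory.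
Import numFieldNormedType.Exports.
Local Open Scope classical_set_scope.
Local Open Scope ring_scope.

Lemma harm_01 (R : realType) (n : nat) : 0 <= (harmonic n : R) <= 1.
Proof.
rewrite /= invr_ge0 ler0n /= invf_le1 ?ltr0n // ler1n //.
Qed.

Lemma seg_eq (R : realType) (X : normedModType R) (x xbar : X) (t : R) :
  xbar + t *: (x - xbar) = t *: x + (1 - t) *: xbar.
Proof.
by rewrite scalerBr scalerBl scale1r addrCA.
Qed.

Theorem proposition3p1 (R : realType) (X Y : completeNormedModType R)
    (F : X -> set Y) (A : set X) (ybar : Y) (xbar : X) (eta : R) :
  closed_convex_map F ->
  closed A -> convex_set' A ->
  F xbar ybar -> A xbar ->
  0 < eta ->
  (forall eta1 eta2 : R, 0 <= eta1 -> 0 <= eta2 -> eta1 + eta2 < eta ->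
     DFinv_set F ybar xbar (scale_set eta1 (unit_ball Y))
       `&` mink_sum (contingent_cone A xbar) (scale_set eta2 (unit_ball X))
     `<=` unit_ball X) ->
  [set x | F x ybar /\ A x] = [set xbar].
Proof.
move=> [_ Fconv] _ Aconv Fx0 Ax0 eta0 H.
apply/seteqP; split => x /=; last by move=> ->.
move=> [Fx Ax].
have [//|neq] := eqVneq x xbar.
exfalso.
set d := x - xbar.
have dpos : 0 < `|d| by rewrite normr_gt0 subr_eq0.
set c : R := 2 / `|d|.
have cpos : 0 < c by rewrite /c divr_gt0.
have c0 : c != 0 by rewrite gt_eqF.
set u := c *: d.
have nu : `|u| = 2.
  by rewrite /u normrZ gtr0_norm // /c divfK // gt_eqF.
pose tn := fun n : nat => harmonic n * c^-1.
have tn_cvg : tn @ \oo --> (0 : R).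
  rewrite -(mul0r c^-1); exact: cvgMr_tmp cvg_harmonic.
have tn_pos : forall n, 0 < tn n.
  by move=> n; rewrite /tn mulr_gt0 // invr_gt0.
have tnu : forall n, tn n *: u = harmonic n *: d.
  by move=> n; rewrite /u scalerA /tn divfK.
have := H 0 0 (lexx _) (lexx _); rewrite addr0 => /(_ eta0 u).
have : `|u| <= 1 -> False by rewrite nu => h; lra.
move=> Hn Hu; apply: Hn; apply: Hu; split.
- exists 0.
    by exists 0; [rewrite /unit_ball /= normr0 | rewrite scale0r].
  exists (fun=> u), (fun=> 0), tn; split; first exact: cvg_cst.
  split; first exact: cvg_cst.
  split => //; split => // n.
  rewrite tnu scaler0 addr0 seg_eq.
  have := Fconv _ _ _ _ (harmonic n) Fx Fx0 (harm_01 _ n).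
  have yK : forall t : R, t *: ybar + (1 - t) *: ybar = ybar.
    by move=> t; rewrite -scalerDl addrC subrK scale1r.
  by rewrite yK.
- exists u.
    exists (fun=> u), tn; split; first exact: cvg_cst.
    split => //; split => // n.
    rewrite tnu seg_eq; exact: Aconv (harm_01 _ n).
  exists 0; last by rewrite addr0.
  by exists 0; [rewrite /unit_ball /= normr0 | rewrite scale0r].
Qed.
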